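(* Let $\Omega,\Omega'$ be finite words in the letters $\{R_j,T_j:j\ge1\}$. Then $\Phi_\Omega=\Phi_{\Omega'}$ as endomorphisms of $\mathbb Z[x_1,x_2,\dots]$ if and only if $\Omega$ and $\Omega'$ have the same image in the augmented Thompson monoid $\widetilde{\mathrm{Th}}$.
   Context: Operators on $\mathbb Z[x_1,x_2,\dots]$: $R_if=f(x_1,\dots,x_{i-1},0,x_i,x_{i+1},\dots)$ and $T_if=\frac1{x_i}(R_{i+1}f-R_if)$. For a word $\Omega=X_1\cdots X_k$, $\Phi_\Omega=\mathrm{op}(X_1)\circ\cdots\circ\mathrm{op}(X_k)$ where letter $R_j$ maps to the operator $R_j$ and $T_j$ to $T_j$ (empty word gives the identity). The augmented Thompson monoid $\widetilde{\mathrm{Th}}$ is the quotient of the free monoid on letters $\{T_j,R_j:j\ge1\}$ by the relations $T_iT_j=T_jT_{i+1}$ for $i>j$; $T_iR_j=R_jT_{i+1}$ for $i\ge j$; $R_iT_j=T_jR_{i+1}$ for $i>j$; $R_iR_j=R_jR_{i+1}$ for $i\ge j$. *)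

(* Defs.v *)
From HB Require Import structures.
From mathcomp Require Import all_boot all_algebra.
From mathcomp Require Import finmap.
From mathcomp Require Import monalg.
From Stdlib Require Import Relations.

Set Implicit Arguments.
Unset Strict Implicit.
Unset Printing Implicit Defensive.

Import GRing.Theory.
Local Open Scope ring_scope.

(* CONVENTION: the variable x_(p+1) of the paper is the monomial  ucm p
   (0-based variable index p). *)
Definition Zx := {malg int[{cmonom nat}]}.

Definition xvar (p : nat) : Zx := << ucm p >>.

Definition subst (s : nat -> Zx) (g : Zx) : Zx :=
  mmap (fun c : int => c%:~R) (fun m : {cmonom nat} =>
    \prod_(p <- finsupp m) s p ^+ (m p)) g.

(* R_(k+1) f = f(x_1, ..., x_k, 0, x_(k+1), x_(k+2), ...):
   the argument in 0-based position p is x_(p+1) if p < k, 0 if p = k,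
   and x_p if p > k. *)
Definition Rop (k : nat) (g : Zx) : Zx :=
  subst (fun p => if (p < k)%N then xvar p else if (p == k)%N then 0 else xvar p.-1) g.

(* exact division by the variable x_(k+1): monomials not divisible by it are
   dropped (only applied to polynomials divisible by x_(k+1)). *)
Definition divX (k : nat) (g : Zx) : Zx :=
  \sum_(m <- msupp g | (0 < m k)%N) << g@_m *g divcm m (ucm k) >>.

(* T_(k+1) f = (R_(k+2) f - R_(k+1) f) / x_(k+1) *)
Definition Top (k : nat) (g : Zx) : Zx := divX k (Rop k.+1 g - Rop k g).

(* Letters: Rl k stands for R_(k+1), Tl k stands for T_(k+1). *)
Inductive letter : Type := Rl of nat | Tl of nat.

Definition op (l : letter) : Zx -> Zx :=
  match l with Rl k => Rop k | Tl k => Top k end.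

Definition Phi (w : seq letter) : Zx -> Zx :=
  foldr (fun l acc => op l \o acc) id w.

(* Defining relations of the augmented Thompson monoid (index-shift
   invariant, so they read the same with 0-based indices). *)
Inductive threl : seq letter -> seq letter -> Prop :=
| relTT i j : (j < i)%N -> threl [:: Tl i; Tl j] [:: Tl j; Tl i.+1]
| relTR i j : (j <= i)%N -> threl [:: Tl i; Rl j] [:: Rl j; Tl i.+1]
| relRT i j : (j < i)%N -> threl [:: Rl i; Tl j] [:: Tl j; Rl i.+1]
| relRR i j : (j <= i)%N -> threl [:: Rl i; Rl j] [:: Rl j; Rl i.+1].

Definition thstep (a b : seq letter) : Prop :=
  exists u v l r, threl l r /\ a = u ++ l ++ v /\ b = u ++ r ++ v.

(* two words have the same image in the augmented Thompson monoid iff they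
   are equivalent for the monoid congruence generated by threl *)
Definition th_equiv : seq letter -> seq letter -> Prop :=
  clos_refl_sym_trans _ thstep.

(* Main.v *)
Require Import Defs.
From mathcomp Require Import all_boot all_algebra.
From mathcomp Require Import finmap monalg.
From HB Require Import structures.
From mathcomp Require Import zify.
From Stdlib Require Import FunctionalExtensionality Relations.

Set Implicit Arguments.
Unset Strict Implicit.
Unset Printing Implicit Defensive.



Definition del (k : nat) (a : nat -> nat) : nat -> nat :=
  fun p => if (p < k)%N then a p else a p.+1.
Definition mrg (k : nat) (a : nat -> nat) : nat -> nat :=
  fun p => if (p < k)%N then a p else if p == k then (a k + a k.+1).-1 else a p.+1.

Definition actL (l : letter) (a : nat -> nat) : option (bool * (nat -> nat)) :=
  match l with
  | Rl k => if a k == 0%N then Some (false, del k a) else None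
  | Tl k => if (a k != 0%N) && (a k.+1 == 0%N) then Some (false, mrg k a)
            else if (a k == 0%N) && (a k.+1 != 0%N) then Some (true, mrg k a)
            else None
  end.

Definition bindS (r : option (bool * (nat -> nat)))
  (F : (nat -> nat) -> option (bool * (nat -> nat))) :=
  match r with
  | None => None
  | Some (s, b) => match F b with None => None | Some (s', c) => Some (s (+) s', c) end
  end.

Definition actW (w : seq letter) (a : nat -> nat) : option (bool * (nat -> nat)) :=
  foldr (fun l r => bindS r (actL l)) (Some (false, a)) w.

Lemma bindS_assoc r F G :
  bindS (bindS r F) G = bindS r (fun b => bindS (F b) G).
Proof.
case: r => [[s b]|] //=; case: (F b) => [[s' c]|] //=.
case: (G c) => [[s'' d]|] //=; by rewrite addbA.
Qed.

Lemma bindS_ext r F G : (forall b, F b = G b) -> bindS r F = bindS r G.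
Proof. by move=> E; case: r => [[s b]|] //=; rewrite E. Qed.

Lemma bindS_ret r : bindS r (fun b => Some (false, b)) = r.
Proof. by case: r => [[s b]|] //=; rewrite addbF. Qed.

Lemma ret_bindS a F : bindS (Some (false, a)) F = F a.
Proof. by rewrite /=; case: (F a) => [[s b]|]. Qed.

Lemma actW_cat u v a : actW (u ++ v) a = bindS (actW v a) (actW u).
Proof.
elim: u a => [|l u IH] a /=; first by rewrite bindS_ret.
by rewrite IH bindS_assoc.
Qed.

Lemma actW1 l a : actW [:: l] a = actL l a.
Proof. by rewrite /actW /=; case: (actL l a) => [[s b]|]. Qed.

Lemma actW2 X Y a : actW [:: X; Y] a = bindS (actL Y a) (actL X).
Proof.
rewrite -cat1s actW_cat actW1; apply: bindS_ext => b; exact: actW1.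
Qed.

Lemma mrg_lt k a p : (p < k)%N -> mrg k a p = a p.
Proof. by rewrite /mrg => ->. Qed.
Lemma mrg_gt k a p : (k < p)%N -> mrg k a p = a p.+1.
Proof. rewrite /mrg => h; case: ifP => h1; [lia|]; case: eqP => //; lia. Qed.
Lemma del_lt k a p : (p < k)%N -> del k a p = a p.
Proof. by rewrite /del => ->. Qed.
Lemma del_ge k a p : (k <= p)%N -> del k a p = a p.+1.
Proof. rewrite /del => h; case: ifP => //; lia. Qed.

Ltac dec1 := match goal with |- context [if ?c then _ else _] =>
  let H := fresh "H" in
  first [ have H : c = true by lia | have H : c = false by lia | case H : c ];
  rewrite ?H end.
Ltac fe := let p := fresh "p" in apply: functional_extensionality => p;
  rewrite /mrg /del; repeat dec1; rewrite /= ?succnK;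
  repeat match goal with H : (_ == _) = true |- _ => move/eqP: H => H; subst end;
  try lia; try (f_equal; lia).

Lemma threl_act l r : threl l r -> forall a, actW l a = actW r a.
Proof.
case=> i j h a; rewrite !actW2.
- case h1: (a j == 0%N); case h2: (a j.+1 == 0%N); case h3: (a i.+1 == 0%N);
  case h4: (a i.+2 == 0%N); rewrite /= ?h1 ?h2 ?h3 ?h4 /=;
  rewrite ?(mrg_gt a (ltac:(lia) : (j < i)%N)) ?(mrg_gt a (ltac:(lia) : (j < i.+1)%N))
     ?(mrg_lt a (ltac:(lia) : (j < i.+1)%N)) ?(mrg_lt a (ltac:(lia) : (j.+1 < i.+1)%N))
     ?h1 ?h2 ?h3 ?h4 //=; congr (Some (_, _)); fe.
- case h1: (a j == 0%N); case h3: (a i.+1 == 0%N);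
  case h4: (a i.+2 == 0%N); rewrite /= ?h1 ?h3 ?h4 /=;
  rewrite ?(del_ge a (ltac:(lia) : (j <= i)%N)) ?(del_ge a (ltac:(lia) : (j <= i.+1)%N))
     ?(mrg_lt a (ltac:(lia) : (j < i.+1)%N))
     ?h1 ?h3 ?h4 //=; congr (Some (_, _)); fe.
- case h1: (a j == 0%N); case h2: (a j.+1 == 0%N); case h3: (a i.+1 == 0%N);
  rewrite /= ?h1 ?h2 ?h3 /=;
  rewrite ?(mrg_gt a (ltac:(lia) : (j < i)%N))
     ?(del_lt a (ltac:(lia) : (j < i.+1)%N)) ?(del_lt a (ltac:(lia) : (j.+1 < i.+1)%N))
     ?h1 ?h2 ?h3 //=; congr (Some (_, _)); fe.
- case h1: (a j == 0%N); case h3: (a i.+1 == 0%N);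
  rewrite /= ?h1 ?h3 /=;
  rewrite ?(del_ge a (ltac:(lia) : (j <= i)%N))
     ?(del_lt a (ltac:(lia) : (j < i.+1)%N))
     ?h1 ?h3 //=; congr (Some (_, _)); fe.
Qed.

Lemma thstep_act a b : thstep a b -> forall x, actW a x = actW b x.
Proof.
move=> [u [v [l [r [hr [-> ->]]]]]] x.
have E : actW l = actW r := functional_extensionality _ _ (threl_act hr).
by rewrite !actW_cat E.
Qed.

Lemma th_equiv_act a b : th_equiv a b -> forall x, actW a x = actW b x.
Proof.
move=> h; elim: h => [p q hs|p|p q _ ih|p q r _ ih1 _ ih2] x.
- exact: thstep_act.
- done.
- by rewrite ih.
- by rewrite ih1 ih2.
Qed.

Definition idx (l : letter) := match l with Rl k => k | Tl k => k end.
Definition isT (l : letter) := match l with Rl _ => false | Tl _ => true end.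
Definition bnd (l : letter) := (idx l + isT l)%N.
Definition ok (X Y : letter) := (idx X < bnd Y)%N.
Definition bump (l : letter) := match l with Rl k => Rl k.+1 | Tl k => Tl k.+1 end.

Fixpoint ins (X : letter) (N : seq letter) : seq letter :=
  match N with
  | [::] => [:: X]
  | Y :: N' => if ok X Y then X :: Y :: N' else Y :: ins (bump X) N'
  end.

Definition nfw (w : seq letter) := foldr ins [::] w.

Lemma threl_nok X Y : ~~ ok X Y -> threl [:: X; Y] [:: Y; bump X].
Proof.
case: X => i; case: Y => j; rewrite /ok /bnd /= => h.
- apply: relRR; lia.
- apply: relRT; lia.
- apply: relTR; lia.
- apply: relTT; lia.
Qed.

Lemma th_cons X a b : th_equiv a b -> th_equiv (X :: a) (X :: b).
Proof.
move=> h; elim: h.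
- move=> x y [u [v [l [r [hr [-> ->]]]]]]; apply: rst_step.
  by exists (X :: u), v, l, r.
- move=> x; exact: rst_refl.
- move=> x y _ h; exact: rst_sym.
- move=> x y z _ h1 _ h2; exact: rst_trans h2.
Qed.

Lemma ins_equiv X N : th_equiv (X :: N) (ins X N).
Proof.
elim: N X => [|Y N IH] X /=; first exact: rst_refl.
case: ifP => h; first exact: rst_refl.
apply: rst_trans (th_cons Y (IH (bump X))).
apply: rst_step; exists [::], N, [:: X; Y], [:: Y; bump X]; split=> //.
apply: threl_nok; by rewrite h.
Qed.

Lemma nfw_equiv w : th_equiv w (nfw w).
Proof.
elim: w => [|X w IH] /=; first exact: rst_refl.
exact: rst_trans (th_cons X IH) (ins_equiv X (nfw w)).
Qed.

Lemma ok_bump X Y : ~~ ok X Y -> ok Y (bump X).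
Proof. case: X => i; case: Y => j; rewrite /ok /bnd /=; lia. Qed.

Lemma path_ins W Z M : ok W Z -> path ok W M -> path ok W (ins Z M).
Proof.
elim: M W Z => [|Y M IH] W Z /=; first by move=> ->.
move=> hWZ /andP [hWY hp]; case: ifP => h /=.
- by rewrite hWZ h hp.
- rewrite hWY /=; apply: IH => //; apply: ok_bump; by rewrite h.
Qed.

Lemma sorted_ins Z M : sorted ok M -> sorted ok (ins Z M).
Proof.
case: M => [|Y M] //= hp; case: ifP => h /=; first by rewrite h.
apply: path_ins => //; apply: ok_bump; by rewrite h.
Qed.

Lemma nfw_sorted w : sorted ok (nfw w).
Proof. elim: w => [|X w IH] //=; exact: sorted_ins. Qed.



Definition bs (a : nat -> nat) := exists B, forall p, (B <= p)%N -> a p = 0%N.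

Definition ins0 k (c : nat -> nat) : nat -> nat :=
  fun p => if (p < k)%N then c p else if p == k then 0%N else c p.-1.
Definition secL k (c : nat -> nat) : nat -> nat :=
  fun p => if (p < k)%N then c p else if p == k then (c k).+1
           else if p == k.+1 then 0%N else c p.-1.
Definition secR k (c : nat -> nat) : nat -> nat :=
  fun p => if (p < k)%N then c p else if p == k then 0%N
           else if p == k.+1 then (c k).+1 else c p.-1.

Lemma bs_ins0 k c : bs c -> bs (ins0 k c).
Proof. move=> [B hB]; exists (B + k).+1 => p hp; rewrite /ins0.
case: ifP => h; [lia|]; case: eqP => h'; [lia|]; apply: hB; lia. Qed.
Lemma bs_secL k c : bs c -> bs (secL k c).
Proof. move=> [B hB]; exists (B + k).+2 => p hp; rewrite /secL.
case: ifP => h; [lia|]; case: eqP => h'; [lia|]; case: eqP => h''; [lia|]; apply: hB; lia. Qed.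
Lemma bs_secR k c : bs c -> bs (secR k c).
Proof. move=> [B hB]; exists (B + k).+2 => p hp; rewrite /secR.
case: ifP => h; [lia|]; case: eqP => h'; [lia|]; case: eqP => h''; [lia|]; apply: hB; lia. Qed.

Lemma act_ins0 k c : actL (Rl k) (ins0 k c) = Some (false, c).
Proof.
rewrite /= /ins0 ltnn eqxx /=; congr (Some (_, _)); rewrite ?/ins0 ?/secL ?/secR; fe.
Qed.
Lemma secL_k k c : secL k c k = (c k).+1.
Proof. by rewrite /secL ltnn eqxx. Qed.
Lemma secL_k1 k c : secL k c k.+1 = 0%N.
Proof. rewrite /secL; repeat dec1 => //. Qed.
Lemma secR_k k c : secR k c k = 0%N.
Proof. by rewrite /secR ltnn eqxx. Qed.
Lemma secR_k1 k c : secR k c k.+1 = (c k).+1.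
Proof. rewrite /secR; repeat dec1 => //. Qed.
Lemma act_secL k c : actL (Tl k) (secL k c) = Some (false, c).
Proof.
rewrite /= secL_k secL_k1 /=; do 2 f_equal; rewrite /secL; fe.
Qed.
Lemma act_secR k c : actL (Tl k) (secR k c) = Some (true, c).
Proof.
rewrite /= secR_k secR_k1 /=; do 2 f_equal; rewrite /secR; fe.
Qed.

Lemma actW_rcons H X a : actW (rcons H X) a = bindS (actL X a) (actW H).
Proof. by rewrite -cats1 actW_cat actW1. Qed.

Lemma def_rcons H X a s c : actL X a = Some (s, c) ->
  (actW (rcons H X) a <> None <-> actW H c <> None).
Proof.
move=> e; rewrite actW_rcons e /=; case: (actW H c) => [[s' d]|] //; split=> //.
Qed.

Lemma ok_le X Y : ok X Y -> (idx X <= idx Y)%N.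
Proof. case: X => i; case: Y => j; rewrite /ok /bnd /=; lia. Qed.

Lemma sorted_rcons_inv H X : sorted ok (rcons H X) ->
  sorted ok H /\ all (fun Y => (idx Y < bnd X)%N) H.
Proof.
elim: H => [|Y H IH] //= hp.
have hs : sorted ok (rcons H X) by apply: path_sorted hp.
have [sH aH] := IH hs; split.
- by move: hp; rewrite rcons_path => /andP [].
- rewrite aH andbT; case: H {IH hs sH} aH hp => [|Z H] /=.
  + by rewrite andbT.
  + move=> /andP [hZ _] /andP [hYZ _]; have := ok_le hYZ; lia.
Qed.

Lemma ins0_gt j c p : (j < p)%N -> ins0 j c p = c p.-1.
Proof. rewrite /ins0 => h; repeat dec1 => //. Qed.
Lemma secL_gt j c p : (j.+1 < p)%N -> secL j c p = c p.-1.
Proof. rewrite /secL => h; repeat dec1 => //. Qed.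

Lemma wit N : sorted ok N -> forall B, all (fun Y => (idx Y < B)%N) N ->
  forall p, (B <= p)%N ->
  (exists a, bs a /\ actW N a <> None /\ a p <> 0%N) /\
  (exists a, bs a /\ actW N a <> None /\ a p = 0%N /\ a p.+1 = 0%N).
Proof.
elim/last_ind: N => [|H X IH] hs B hall p hp.
- split.
  + exists (fun q => if q == p then 1%N else 0%N); split.
    * exists p.+1 => q hq; case: eqP => //; lia.
    * by rewrite eqxx.
  + by exists (fun _ => 0%N); split => //; exists 0%N.
- have [sH aH] := sorted_rcons_inv hs.
  move: hall; rewrite all_rcons => /andP [hX _].
  have IH' := IH sH (bnd X) aH.
  case: X hs aH hX IH' => j hs aH hX IH' /=; rewrite /bnd /= ?addn0 ?addn1 in IH'; simpl in hX.
  + have [[c [bc [dc nc]]] [c' [bc' [dc' [z1 z2]]]]] := IH' p.-1 ltac:(lia).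
    split.
    * exists (ins0 j c); split; first exact: bs_ins0.
      split; first by apply/(def_rcons H (act_ins0 j c)).
      by rewrite ins0_gt //; lia.
    * exists (ins0 j c'); split; first exact: bs_ins0.
      split; first by apply/(def_rcons H (act_ins0 j c')).
      rewrite !ins0_gt //; try lia; split => //.
      by have -> : p = p.-1.+1 by lia.
  + case: (eqVneq p j.+1) => [-> | hne].
    * have [[c [bc [dc nc]]] [c' [bc' [dc' [z1 z2]]]]] := IH' j.+1 ltac:(lia).
      split.
      -- exists (secR j c); split; first exact: bs_secR.
         split; first by apply/(def_rcons H (act_secR j c)).
         by rewrite secR_k1.
      -- exists (secL j c'); split; first exact: bs_secL.
         split; first by apply/(def_rcons H (act_secL j c')).
         by rewrite secL_k1 secL_gt.
    * have [[c [bc [dc nc]]] [c' [bc' [dc' [z1 z2]]]]] := IH' p.-1 ltac:(lia).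
      split.
      -- exists (secL j c); split; first exact: bs_secL.
         split; first by apply/(def_rcons H (act_secL j c)).
         by rewrite secL_gt //; lia.
      -- exists (secL j c'); split; first exact: bs_secL.
         split; first by apply/(def_rcons H (act_secL j c')).
         rewrite !secL_gt //; try lia; split => //.
         by have -> : p = p.-1.+1 by lia.
Qed.

Lemma forcedR H k a : actW (rcons H (Rl k)) a <> None -> a k = 0%N.
Proof. rewrite actW_rcons /=; case: eqP => //. Qed.

Lemma forcedT H k a : actW (rcons H (Tl k)) a <> None ->
  (a k == 0%N) != (a k.+1 == 0%N).
Proof. rewrite actW_rcons /=; case: (a k == 0%N); case: (a k.+1 == 0%N) => //. Qed.

Lemma witT H k : sorted ok (rcons H (Tl k)) ->
  exists a, bs a /\ actW (rcons H (Tl k)) a <> None /\ a k <> 0%N.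
Proof.
move=> hs; have [sH aH] := sorted_rcons_inv hs.
have [[c [bc [dc _]]] _] := wit sH aH (leqnn _).
exists (secL k c); split; first exact: bs_secL.
split; first by apply/(def_rcons H (act_secL k c)).
by rewrite secL_k.
Qed.

Lemma key N H' X' : sorted ok N -> sorted ok (rcons H' X') ->
  (forall a, bs a -> actW N a = actW (rcons H' X') a) ->
  forall B, all (fun Y => (idx Y < B)%N) N -> (B <= idx X')%N -> False.
Proof.
move=> hs hs' E B hall hB.
case: X' hs' E hB => k hs' E hB /=;
have [[a [ba [da na]]] [a' [ba' [da' [z1 z2]]]]] := wit hs hall hB.
- by apply: na; apply: (forcedR (H := H')); rewrite -E.
- move: (@forcedT H' k a'); rewrite -(E a' ba') z1 z2 /= => h; by have := h da'.
Qed.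

Lemma all_bnd H X : sorted ok (rcons H X) ->
  all (fun Y => (idx Y < (idx X).+1)%N) (rcons H X).
Proof.
move=> hs; have [_ aH] := sorted_rcons_inv hs.
rewrite all_rcons ltnSn /=; apply: sub_all aH => Y /=.
case: X {hs} => k /=; rewrite /bnd /=; lia.
Qed.

Lemma nf_inj N N' : sorted ok N -> sorted ok N' ->
  (forall a, bs a -> actW N a = actW N' a) -> N = N'.
Proof.
elim/last_ind: N N' => [|H X IH] N' hs hs' E; case/lastP: N' hs' E => [|H' X'] hs' E //.
- exfalso; exact: (@key _ _ _ hs hs' E 0%N).
- exfalso; apply: (@key _ _ _ hs' hs _ 0%N) => // a ba; by rewrite E.
- have hA := all_bnd hs; have hA' := all_bnd hs'.
  have E' : forall a, bs a -> actW (rcons H' X') a = actW (rcons H X) a.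
    by move=> a ba; rewrite E.
  have hXX : idx X = idx X'.
    case: (ltngtP (idx X) (idx X')) => // h.
    + by exfalso; apply: (key hs hs' E hA).
    + by exfalso; apply: (key hs' hs E' hA').
  have eX : X = X'.
    case: X X' hXX hs hs' E E' {hA hA'} => i [] j /= <- hs hs' E E' //.
    + exfalso; have [a [ba [da na]]] := witT hs'.
      by apply: na; apply: (forcedR (H := H)); rewrite E.
    + exfalso; have [a [ba [da na]]] := witT hs.
      by apply: na; apply: (forcedR (H := H')); rewrite -E.
  subst X'; congr rcons.
  have [sH _] := sorted_rcons_inv hs; have [sH' _] := sorted_rcons_inv hs'.
  apply: IH => // c bc.
  case: X {hs hs' E' hA hA' hXX} E => k E.
  + have := E (ins0 k c) (bs_ins0 k bc); by rewrite !actW_rcons act_ins0 !ret_bindS.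
  + have := E (secL k c) (bs_secL k bc); by rewrite !actW_rcons act_secL !ret_bindS.
Qed.


Import GRing.Theory.
Local Open Scope ring_scope.


Lemma monU_mul (m1 m2 : {cmonom nat}) :
  (<< m1 >> : Zx) * << m2 >> = << mmul m1 m2 >>.
Proof. by rewrite malgM_def fgmulUU mulr1. Qed.

Lemma one_Zx : (1 : Zx) = << (mone : {cmonom nat}) >>.
Proof. by rewrite -mpolyC1E. Qed.

Lemma ucmN (q i : nat) : ucm q i = (q == i)%N.
Proof. rewrite ucmE; congr nat_of_bool; by apply/eqP/eqP. Qed.

Lemma xvar_exp (q n : nat) : exists P : {cmonom nat},
  (forall i : nat, P i = (n * (q == i))%N) /\ xvar q ^+ n = << P >>.
Proof.
elim: n => [|n [P [hP eP]]].
- exists (mone : {cmonom nat}); split; first by move=> i; rewrite cm1.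
  by rewrite expr0 one_Zx.
- exists (mmul (ucm q) P); split.
  + by move=> i; rewrite cmM hP ucmN mulSn.
  + by rewrite exprS eP /xvar monU_mul; clear; reflexivity.
Qed.

Lemma prod_xvar (r : seq nat) (g e : nat -> nat) : exists M : {cmonom nat},
  (forall i : nat, M i = \sum_(p <- r) e p * (g p == i))%N /\
  \prod_(p <- r) xvar (g p) ^+ e p = << M >>.
Proof.
elim: r => [|x r [M [hM eM]]].
- exists (mone : {cmonom nat}); split; first by move=> i; rewrite cm1 big_nil.
  by rewrite big_nil one_Zx.
- have [P [hP eP]] := xvar_exp (g x) (e x).
  exists (mmul P M); split.
  + by move=> i; rewrite cmM hP hM big_cons.
  + by rewrite big_cons eM eP monU_mul; clear; reflexivity.
Qed.

Lemma sum_delta (r : seq nat) (F : nat -> nat) (u : nat) : uniq r ->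
  (\sum_(p <- r) F p * (p == u))%N = if u \in r then F u else 0%N.
Proof.
elim: r => [|x r IH] /=; first by rewrite big_nil.
move=> /andP [hx hu]; rewrite big_cons IH // inE.
case: (eqVneq x u) => [<-|hne] /=; first by rewrite (negPf hx) muln1 addn0.
by rewrite muln0 add0n.
Qed.

Definition shk (k p : nat) := if (p < k)%N then p else p.-1.
Definition unsh (k i : nat) := if (i < k)%N then i else i.+1.

Lemma shk_eq k p i : p != k -> (shk k p == i) = (p == unsh k i).
Proof.
rewrite /shk /unsh => h; case: ifP => h1; case: ifP => h2; apply/eqP/eqP; lia.
Qed.

Lemma Rop_U k (m : {cmonom nat}) :
  Rop k << m >> = \prod_(p <- finsupp m)
    (if (p < k)%N then xvar p else if p == k then 0 else xvar p.-1) ^+ m p.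
Proof. by rewrite /Rop /subst mmapU mul1r. Qed.

Lemma Rop_mono k (m : {cmonom nat}) :
  (m k != 0%N -> Rop k << m >> = 0) /\
  (m k = 0%N -> exists D : {cmonom nat},
     (forall i : nat, D i = del k (fun j => m j) i) /\ Rop k << m >> = << D >>).
Proof.
split.
- move=> hk; rewrite Rop_U (big_rem k); last by rewrite -cmE_neq0.
  rewrite ltnn eqxx expr0n (negPf hk) /= mul0r; reflexivity.
- move=> hk; rewrite Rop_U.
  have hnk : k \notin finsupp m by rewrite -cmE_neq0 hk.
  rewrite (eq_big_seq (fun p => xvar (shk k p) ^+ m p)); last first.
    move=> p hp; have hpk : p != k by apply: contraNneq hnk => <-.
    rewrite /shk (negPf hpk); case: ifP => //.
  have [M [hM eM]] := prod_xvar (finsupp m) (shk k) (fun p => m p).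
  exists M; split; last by rewrite eM.
  move=> i; rewrite hM.
  rewrite (eq_big_seq (fun p => m p * (p == unsh k i))%N); last first.
    move=> p hp; have hpk : p != k by apply: contraNneq hnk => <-.
    by rewrite shk_eq.
  rewrite sum_delta ?fset_uniq // /del /unsh.
  by case: (i < k)%N => /=; case: ifP => // h; move/negbT: h;
    rewrite -cmE_neq0 negbK => /eqP ->.
Qed.

Definition hk (k : nat) (m : {cmonom nat}) : Zx :=
  if (0 < m k)%N then << divcm m (ucm k) >> else 0.

Lemma divX_mmap k g : divX k g = mmap (fun c : int => (c%:MP : Zx)) (hk k) g.
Proof.
rewrite /divX mmapE big_mkcond; apply: eq_bigr => m _; rewrite /hk.
case: (0 < m k)%N.
- rewrite malgM_def fgmulUU mulr1 mul1m. reflexivity.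
- rewrite mulr0. reflexivity.
Qed.

Lemma divX_B k x y : divX k (x - y) = divX k x - divX k y.
Proof. rewrite !divX_mmap mmapB. reflexivity. Qed.

Lemma divX_U k m : divX k << m >> = hk k m.
Proof. rewrite divX_mmap mmapU /= mpolyC1E mul1r. reflexivity. Qed.

Lemma divX0 k : divX k 0 = 0.
Proof. by rewrite divX_mmap mmap0. Qed.

Lemma Top_mono k (m : {cmonom nat}) :
  match actL (Tl k) (fun i => m i) with
  | None => Top k << m >> = 0
  | Some (s, b) => exists m' : {cmonom nat}, (forall i : nat, m' i = b i) /\
        Top k << m >> = (if s then - << m' >> else << m' >>)
  end.
Proof.
rewrite /= /Top.
case: (eqVneq (m k) 0%N) => h0; case: (eqVneq (m k.+1) 0%N) => h1 /=;
have [R1a R1b] := Rop_mono k.+1 m;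
have [R0a R0b] := Rop_mono k m.
- idtac.
  have [D1 [hD1 e1]] := R1b h1; have [D0 [hD0 e0]] := R0b h0.
  have eD : D1 = D0.
    apply/eqP/cmP => i; rewrite hD1 hD0 /del.
    repeat dec1 => //; try lia; have e : i = k by lia.
    by rewrite e h0 h1.
  rewrite e1 e0 eD subrr divX0; reflexivity.
- idtac.
  have [D0 [hD0 e0]] := R0b h0.
  exists (divcm D0 (ucm k)); split.
  + move=> i; rewrite divcmE ucmN hD0 /del /mrg.
    case: (ltngtP i k) => hi; rewrite ?subn0 //.
    by rewrite hi h0 add0n subn1.
  + rewrite (R1a h1) e0 divX_B divX0 divX_U /hk.
    have -> : (0 < D0 k)%N = true by rewrite hD0 /del ltnn; lia.
    rewrite sub0r; reflexivity.
- idtac.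
  have [D1 [hD1 e1]] := R1b h1.
  exists (divcm D1 (ucm k)); split.
  + move=> i; rewrite divcmE ucmN hD1 /del /mrg.
    case: (ltngtP i k) => hi; rewrite ?subn0.
    * by rewrite ltnS ltnW.
    * by rewrite ltnS leqNgt hi.
    * by rewrite hi ltnSn h1 addn0 subn1.
  + rewrite (R0a h0) e1 divX_B divX0 divX_U /hk.
    have -> : (0 < D1 k)%N = true by rewrite hD1 /del ltnSn; lia.
    rewrite subr0; reflexivity.
- idtac.
  rewrite (R0a h0) (R1a h1) subrr divX0; reflexivity.
Qed.

Lemma Rop_B k x y : Rop k (x - y) = Rop k x - Rop k y.
Proof. rewrite /Rop /subst mmapB. reflexivity. Qed.

Lemma op_B l x y : op l (x - y) = op l x - op l y.
Proof.
case: l => k /=; first exact: Rop_B.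
have H : forall (V : zmodType) (a b c d : V), a - b - (c - d) = a - c - (b - d).
  by move=> V a b c d; rewrite !opprB !addrA [a - b + d]addrAC [a - c + d]addrAC addrAC.
rewrite /Top !Rop_B (H _ (Rop k.+1 x) (Rop k.+1 y) (Rop k x) (Rop k y)).
rewrite divX_B. reflexivity.
Qed.

Lemma Phi_B w x y : Phi w (x - y) = Phi w x - Phi w y.
Proof. elim: w => [|l w IH] /=; first reflexivity. rewrite IH op_B; reflexivity. Qed.

HB.instance Definition _ w := GRing.isZmodMorphism.Build Zx Zx (Phi w) (Phi_B w).
HB.instance Definition _ l := GRing.isZmodMorphism.Build Zx Zx (op l) (op_B l).

Lemma op_mono l (m : {cmonom nat}) :
  match actL l (fun i => m i) with
  | None => op l << m >> = 0
  | Some (s, b) => exists m' : {cmonom nat}, (forall i : nat, m' i = b i) /\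
        op l << m >> = (if s then - << m' >> else << m' >>)
  end.
Proof.
case: l => k; last exact: Top_mono.
rewrite /=; case: (eqVneq (m k) 0%N) => h0 /=; have [Ra Rb] := Rop_mono k m.
- have [D [hD eD]] := Rb h0; exists D; split => //.
- exact: Ra.
Qed.

Lemma op_N l x : op l (- x) = - op l x.
Proof. exact: (raddfN (op l) x). Qed.
Lemma op_0 l : op l 0 = 0.
Proof. exact: (raddf0 (op l)). Qed.
Lemma Phi_D w x y : Phi w (x + y) = Phi w x + Phi w y.
Proof. exact: (raddfD (Phi w) x y). Qed.
Lemma Phi_0 w : Phi w 0 = 0.
Proof. exact: (raddf0 (Phi w)). Qed.

Lemma Phi_mono w (m : {cmonom nat}) :
  match actW w (fun i => m i) with
  | None => Phi w << m >> = 0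
  | Some (s, b) => exists m' : {cmonom nat}, (forall i : nat, m' i = b i) /\
        Phi w << m >> = (if s then - << m' >> else << m' >>)
  end.
Proof.
elim: w => [|l w IH].
- by exists m.
- change (actW (l :: w) (fun i => m i)) with
    (bindS (actW w (fun i => m i)) (actL l)).
  change (Phi (l :: w) << m >>) with (op l (Phi w << m >>)).
  move: IH; case: (actW w (fun i => m i)) => [[s b]|] /=.
  + move=> [m' [hm' e]].
    have eb : b = (fun i => m' i).
      by apply: functional_extensionality => i; rewrite hm'.
    subst b; have := op_mono l m'.
    case: (actL l (fun i => m' i)) => [[s' c]|] /=.
    * move=> [m'' [h'' e'']]; exists m''; split => //.
      rewrite {}e; case: s; rewrite ?op_N {}e''; case: s' => /=; rewrite ?opprK;
        reflexivity.
    * move=> e0; rewrite {}e; case: s; rewrite ?op_N e0 ?oppr0; reflexivity.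
  + move=> e; rewrite e op_0; reflexivity.
Qed.




Definition mxs (s : seq nat) := foldr (fun p acc => maxn p.+1 acc) 0%N s.

Lemma mxs_gt s p : p \in s -> (p < mxs s)%N.
Proof.
elim: s => [|x s IH] //=; rewrite inE => /orP [/eqP ->|h].
- by rewrite leq_max leqnn.
- by rewrite leq_max (IH h) orbT.
Qed.

Lemma bs_cm (m : {cmonom nat}) : bs (fun i => m i).
Proof.
exists (mxs (finsupp m)) => p hp.
apply/eqP; rewrite cmE_eq0; apply/negP => /mxs_gt; lia.
Qed.

Lemma cm_of_bs a : bs a -> exists M : {cmonom nat}, forall i : nat, M i = a i.
Proof.
move=> [B hB].
have [M [hM _]] := prod_xvar (iota 0 B) id a.
exists M => i; rewrite hM sum_delta ?iota_uniq // mem_iota add0n /=.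
case: ifP => // h; rewrite hB //; lia.
Qed.

Lemma Phi_scale w (c : int) (m : {cmonom nat}) :
  Phi w << c *g m >> = Phi w << m >> *~ c.
Proof.
have -> : << c *g m >> = (<< m >> : Zx) *~ c.
  by rewrite -raddfMz /= -[X in << X *g _ >> = _]intz.
exact: (raddfMz (Phi w)).
Qed.

Lemma act_Phi w w' : (forall a, bs a -> actW w a = actW w' a) ->
  forall f, Phi w f = Phi w' f.
Proof.
move=> E f. rewrite (monalgE f). rewrite (big_morph (Phi w) (Phi_D w) (Phi_0 w)).
rewrite (big_morph (Phi w') (Phi_D w') (Phi_0 w')). apply: eq_bigr => m _.
rewrite (Phi_scale w (f@_m) m). rewrite (Phi_scale w' (f@_m) m). suff key : Phi w << m >> = Phi w' << m >>. rewrite key. reflexivity.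
have := Phi_mono w m; have := Phi_mono w' m. rewrite (E _ (bs_cm m)).
case: (actW w' (fun i => m i)) => [[s b]|].
- move=> [m1 [h1 e1]] [m2 [h2 e2]].
  have e : m2 = m1 by apply/eqP/cmP => i; rewrite h1 h2.
  rewrite e2 e1 e. reflexivity.
- move=> e1 e2. rewrite e1 e2. reflexivity.
Qed.

Lemma sgn_coef (s : bool) (m m' : {cmonom nat}) :
  (if s then - << m >> else << m >> : Zx)@_m' =
  (if s then - ((m == m')%:R) else (m == m')%:R : int).
Proof. by case: s; rewrite ?mcoeffN mcoeffU1. Qed.

Lemma Phi_act w w' : (forall f, Phi w f = Phi w' f) ->
  forall a, bs a -> actW w a = actW w' a.
Proof.
move=> E a ba; have [M hM] := cm_of_bs ba.
have ea : a = (fun i => M i) by apply: functional_extensionality => i; rewrite hM.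
subst a; have := E << M >>.
have := Phi_mono w M; have := Phi_mono w' M.
case: (actW w' (fun i => M i)) => [[s2 b2]|];
case: (actW w (fun i => M i)) => [[s1 b1]|] //.
- move=> [m2 [h2 e2]] [m1 [h1 e1]]; rewrite e1 e2 => e.
  have := congr1 (mcoeff m1) e; rewrite !sgn_coef eqxx.
  case: (eqVneq m2 m1) => [em|ne].
  + subst m2; have eb : b1 = b2.
      by apply: functional_extensionality => i; rewrite -h1 -h2.
    subst b2; clear e e1 e2 h1 h2 E; case: s1; case: s2 => // /eqP //.
  + clear e e1 e2 h1 h2 E; by case: s1; case: s2 => /eqP.
- move=> [m2 [h2 e2]] e1; rewrite e1 e2 => e.
  have := congr1 (mcoeff m2) e; rewrite sgn_coef eqxx mcoeff0.
  clear e e1 e2 h2 E; by case: s2 => /eqP.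
- move=> e2 [m1 [h1 e1]]; rewrite e1 e2 => e.
  have := congr1 (mcoeff m1) e; rewrite sgn_coef eqxx mcoeff0.
  clear e e1 e2 h1 E; by case: s1 => /eqP.
Qed.

Theorem mainTheorem4 (w w' : seq letter) :
  (forall f : Zx, Phi w f = Phi w' f) <-> th_equiv w w'.
Proof.
split.
- move=> H; have A := Phi_act H.
  have eN : nfw w = nfw w'.
    apply: nf_inj; try exact: nfw_sorted.
    move=> a ba; rewrite -(th_equiv_act (nfw_equiv w)) -(th_equiv_act (nfw_equiv w')).
    exact: A.
  apply: rst_trans (nfw_equiv w) _; rewrite eN; exact: rst_sym (nfw_equiv w').
- move=> h; apply: act_Phi => a _; exact: th_equiv_act h a.
Qed.
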